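(* Every bipartite TRVG with respect to the torus on $n$ vertices has at most $2n$ edges. Moreover, this bound is best possible for $n\ge 8$: for every $n\ge 8$ there exists a bipartite TRVG with respect to the torus on $n$ vertices with exactly $2n$ edges.
   Context: View the torus as an axis-parallel rectangle $[0,W]\times[0,H]$ with opposite sides identified. Horizontal lines $y=c$ and vertical lines $x=c$ are then closed curves on the torus. A graph $G$ is a TRVG with respect to the torus if its vertices can be represented by a collection of pairwise non-overlapping axis-parallel rectangles on this torus (a rectangle may wrap across the identified sides), one per vertex, such that two distinct vertices are adjacent if and only if some horizontal or vertical line of the torus intersects the interiors of both of their rectangles (other rectangles do not block visibility). *)

(* Defs.v *)
From Stdlib Require Import Reals ZArith.
From mathcomp Require Import all_boot.
Set Implicit Arguments. Unset Strict Implicit. Unset Printing Implicit Defensive.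

(* Open arc of a circle of circumference L (the real line modulo L):
   the image of the open interval (a, a+len) in R / L Z. *)
Definition in_arc (L a len t : R) : Prop :=
  exists k : Z, Rlt a (Rplus t (Rmult (IZR k) L)) /\ Rlt (Rplus t (Rmult (IZR k) L)) (Rplus a len).

(* A rectangle on the torus R^2 / (W Z x H Z): lower-left corner (x0,y0),
   width w, height h, with 0 < w < W and 0 < h < H (it may wrap across the
   identified sides). *)
Record trect := TRect { rx : R; ry : R; rw : R; rh : R }.

Definition trect_ok (W H : R) (r : trect) : Prop :=
  (Rlt 0 (rw r) /\ Rlt (rw r) W) /\ (Rlt 0 (rh r) /\ Rlt (rh r) H).

Definition in_rect_interior (W H : R) (r : trect) (p q : R) : Prop :=
  in_arc W (rx r) (rw r) p /\ in_arc H (ry r) (rh r) q.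

Definition hor_visible (H : R) (r s : trect) : Prop :=
  exists c : R, in_arc H (ry r) (rh r) c /\ in_arc H (ry s) (rh s) c.

Definition ver_visible (W : R) (r s : trect) : Prop :=
  exists c : R, in_arc W (rx r) (rw r) c /\ in_arc W (rx s) (rw s) c.

Definition simple_graph (T : finType) (e : rel T) : Prop :=
  (forall x, ~~ e x x) /\ (forall x y, e x y = e y x).

Definition bipartite (T : finType) (e : rel T) : Prop :=
  exists side : T -> bool, forall x y, e x y -> side x != side y.

Definition torus_TRVG (T : finType) (e : rel T) : Prop :=
  exists (W H : R) (rect : T -> trect),
    Rlt 0 W /\ Rlt 0 H /\
    (forall v, trect_ok W H (rect v)) /\
    (forall u v, u != v ->
       ~ (exists p q, in_rect_interior W H (rect u) p q /\
                      in_rect_interior W H (rect v) p q)) /\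
    (forall u v, u != v ->
       (e u v <-> (hor_visible H (rect u) (rect v) \/ ver_visible W (rect u) (rect v)))).

Definition edges (T : finType) (e : rel T) : {set {set T}} :=
  [set A : {set T} | [exists x, exists y, [&& x != y, e x y & A == [set x; y]]]].

(* Main.v *)
Require Import Defs.
From Stdlib Require Import Reals ZArith Lra Lia.
From mathcomp Require Import all_boot zify.

Definition ovl (W a l b m : nat) : bool :=
  [|| (b < a + l) && (a < b + m), b + W < a + l | a + W < b + m].

Open Scope R_scope.
Lemma ltR x y : (x < y)%N -> INR x + 1 <= INR y.
Proof. move/leP => h; rewrite -S_INR; exact: le_INR. Qed.
Lemma leR x y : (x <= y)%N -> INR x <= INR y.
Proof. move/leP => h; exact: le_INR. Qed.
Lemma Rlt_nat x y : INR x < INR y -> (x < y)%N.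
Proof. by move/INR_lt/ltP. Qed.

Arguments ltR {x y}.
Arguments leR {x y}.
Arguments Rlt_nat {x y}.
Lemma ovlP (W a l b m : nat) : (a < W)%N -> (b < W)%N -> (0 < l)%N -> (0 < m)%N ->
  (exists c, in_arc (INR W) (INR a) (INR l) c /\ in_arc (INR W) (INR b) (INR m) c)
  <-> ovl W a l b m.
Proof.
move=> aW bW l0 m0; split.
- move=> [c [[k1 [h1 h2]] [k2 [h3 h4]]]].
  have e1 : INR b + IZR (k1 - k2) * INR W < INR a + INR l.
    rewrite minus_IZR Rmult_minus_distr_r.
    set x := IZR k1 * INR W in h1 h2 *; set y := IZR k2 * INR W in h3 h4 *; lra.
  have e2 : INR a < INR b + IZR (k1 - k2) * INR W + INR m.
    rewrite minus_IZR Rmult_minus_distr_r.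
    set x := IZR k1 * INR W in h1 h2 *; set y := IZR k2 * INR W in h3 h4 *; lra.
  have Wp := pos_INR W.
  case: (Z.lt_trichotomy (k1 - k2) 0) => [dn|[d0|dp]].
  + have hd : IZR (k1 - k2) <= -1 by apply IZR_le; lia.
    have : IZR (k1 - k2) * INR W <= -1 * INR W by apply Rmult_le_compat_r.
    move: e1 e2; set x := IZR (k1 - k2) * INR W => e1 e2 hx.
    have : (a + W < b + m)%N by apply: Rlt_nat; rewrite !plus_INR; lra.
    rewrite /ovl; lia.
  + move: e1 e2; rewrite d0 Rmult_0_l => e1 e2.
    have : (b < a + l)%N by apply: Rlt_nat; rewrite !plus_INR; lra.
    have : (a < b + m)%N by apply: Rlt_nat; rewrite !plus_INR; lra.
    rewrite /ovl; lia.
  + have hd : 1 <= IZR (k1 - k2) by apply IZR_le; lia.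
    have : 1 * INR W <= IZR (k1 - k2) * INR W by apply Rmult_le_compat_r.
    move: e1 e2; set x := IZR (k1 - k2) * INR W => e1 e2 hx.
    have : (b + W < a + l)%N by apply: Rlt_nat; rewrite !plus_INR; lra.
    rewrite /ovl; lia.
- move=> h.
  have [[h1 h2]|[h1|h1]] : ((b < a + l)%N /\ (a < b + m)%N) \/ (b + W < a + l)%N \/ (a + W < b + m)%N.
    by move: h; rewrite /ovl; lia.
  + move: (ltR h1) (ltR h2); rewrite !plus_INR => r1 r2.
    have := ltR m0; have := ltR l0; rewrite /= => r3 r4.
    case: (leqP a b) => hab.
    * have := leR hab => r5.
      exists (INR b + /2); split; exists 0%Z; rewrite Rmult_0_l; split; lra.
    * have := ltR hab => r5.
      exists (INR a + /2); split; exists 0%Z; rewrite Rmult_0_l; split; lra.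
  + move: (ltR h1); rewrite !plus_INR => r1.
    have := ltR m0; have := ltR aW; rewrite /= => r3 r4.
    have := pos_INR b; have := pos_INR a => p1 p2.
    exists (INR b + INR W + /2); split.
    * exists 0%Z; rewrite Rmult_0_l; split; lra.
    * exists (-1)%Z; split; lra.
  + move: (ltR h1); rewrite !plus_INR => r1.
    have := ltR l0; have := ltR bW; rewrite /= => r3 r4.
    have := pos_INR b; have := pos_INR a => p1 p2.
    exists (INR a + INR W + /2); split.
    * exists (-1)%Z; split; lra.
    * exists 0%Z; rewrite Rmult_0_l; split; lra.
Qed.
Definition owner (L a l b : R) : Prop :=
  exists k : Z, a <= b + IZR k * L /\ b + IZR k * L < a + l.

Lemma start_in L a l b m c :
  in_arc L a l c -> in_arc L b m c -> owner L a l b \/ owner L b m a.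
Proof.
move=> [k1 [h1 h2]] [k2 [h3 h4]].
destruct (Rle_or_lt a (b + IZR (k1 - k2) * L)) as [H|H].
- left; exists (k1 - k2)%Z; rewrite minus_IZR Rmult_minus_distr_r in H *.
  set x := IZR k1 * L in h1 h2 H *; set y := IZR k2 * L in h3 h4 H *.
  split; lra.
- right; exists (k2 - k1)%Z; rewrite minus_IZR Rmult_minus_distr_r in H; rewrite minus_IZR Rmult_minus_distr_r.
  set x := IZR k1 * L in h1 h2 H *; set y := IZR k2 * L in h3 h4 H *.
  split; lra.
Qed.

Lemma triangle L a l a' l' b m k k' :
  0 < m -> a <= b + IZR k * L -> b + IZR k * L < a + l ->
  a' <= b + IZR k' * L -> b + IZR k' * L < a' + l' ->
  exists c, in_arc L a l c /\ in_arc L a' l' c /\ in_arc L b m c.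
Proof.
move=> hm h1 h2 h3 h4.
set x := IZR k * L in h1 h2 *; set y := IZR k' * L in h3 h4 *.
set eps := Rmin m (Rmin (a + l - (b + x)) (a' + l' - (b + y))).
have he1 : eps <= m by apply Rmin_l.
have he2 : eps <= a + l - (b + x) by apply (Rle_trans _ _ _ (Rmin_r _ _)), Rmin_l.
have he3 : eps <= a' + l' - (b + y) by apply (Rle_trans _ _ _ (Rmin_r _ _)), Rmin_r.
have he0 : 0 < eps.
  apply Rmin_pos; first lra. apply Rmin_pos; lra.
exists (b + eps / 2); split; [|split].
- exists k; rewrite -/x; split; lra.
- exists k'; rewrite -/y; split; lra.
- exists 0%Z; rewrite Rmult_0_l; split; lra.
Qed.
Close Scope R_scope.
From Stdlib Require Import ClassicalEpsilon.

Section P1.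
Variables (T : finType) (W H : R) (rect : T -> trect).

Definition own (d : bool) (u v : T) : Prop :=
  if d then owner W (rx (rect u)) (rw (rect u)) (rx (rect v))
  else owner H (ry (rect u)) (rh (rect u)) (ry (rect v)).
Definition vis (d : bool) (u v : T) : Prop :=
  if d then ver_visible W (rect u) (rect v) else hor_visible H (rect u) (rect v).

Lemma vis_own d u v : vis d u v -> own d u v \/ own d v u.
Proof. by case: d => -[c [h1 h2]] /=; apply: start_in h1 h2. Qed.

Lemma own_tri d u u' v : (forall v, trect_ok W H (rect v)) ->
  own d u v -> own d u' v -> vis d u v /\ vis d u' v /\ vis d u u'.
Proof.
move=> ok; case: d => /= -[k [h1 h2]] [k' [h3 h4]].
- have [[m0 _] _] := ok v.
  have [c [c1 [c2 c3]]] := @triangle _ _ _ _ _ _ _ _ _ m0 h1 h2 h3 h4.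
  by split; [|split]; exists c.
- have [_ [m0 _]] := ok v.
  have [c [c1 [c2 c3]]] := @triangle _ _ _ _ _ _ _ _ _ m0 h1 h2 h3 h4.
  by split; [|split]; exists c.
Qed.
End P1.
Arguments own {T} W H rect d u v.
Arguments vis {T} W H rect d u v.
Arguments vis_own {T W H rect d u v}.
Arguments own_tri {T W H rect d u u' v}.

Lemma part1 (n : nat) (T : finType) (e : rel T) :
  #|T| = n -> simple_graph e -> bipartite e -> torus_TRVG e ->
  #|edges e| <= 2 * n.
Proof.
move=> Hn [irr sym] [side Hside] [W [H [rect [HW [HH [Hok [Hdisj Hvis]]]]]]].
pose Rl (A : {set T}) (p : T * bool) : Prop :=
  exists u, u != p.1 /\ A = [set u; p.1] /\ own W H rect p.2 u p.1.
pose Rb A p : bool := if excluded_middle_informative (Rl A p) then true else false.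
have RbP A p : Rb A p -> Rl A p.
  by rewrite /Rb; case: excluded_middle_informative.
have PRb A p : Rl A p -> Rb A p.
  by rewrite /Rb; case: excluded_middle_informative.
have tot A : A \in edges e -> exists p, Rl A p.
  rewrite inE => /existsP [x /existsP [y /and3P [xy exy /eqP ->]]].
  have [d vd] : exists d, vis W H rect d x y.
    have := (proj1 (Hvis x y xy) exy); case=> h; [exists false | exists true]; exact h.
  case: (vis_own vd) => o.
  - by exists (y, d); exists x; split.
  - exists (x, d); exists y; split; first by rewrite eq_sym.
    by split; first by rewrite setUC.
have inj A A' p : A \in edges e -> A' \in edges e -> Rl A p -> Rl A' p -> A = A'.
  move=> _ _ [u [uv [-> ou]]] [u' [u'v [-> ou']]].
  case: (eqVneq u u') => [-> //|uu'].
  have [v1 [v2 v3]] := own_tri Hok ou ou'.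
  have vise a b d : a != b -> vis W H rect d a b -> e a b.
    by move=> ab; move/(_ a b ab): Hvis => [_ h]; case: d => hv; apply: h; [right|left].
  have e1 := vise _ _ _ uv v1.
  have e2 := vise _ _ _ u'v v2.
  have e3 := vise _ _ _ uu' v3.
  move: (Hside _ _ e1) (Hside _ _ e2) (Hside _ _ e3).
  by case: (side u); case: (side u'); case: (side p.1).
case: (pickP (fun _ : T => true)) => [x0 _ | T0]; last first.
  suff -> : edges e = set0 by rewrite cards0.
  apply/setP => A; rewrite !inE; apply/negbTE/negP.
  by case/existsP => x; have := T0 x.
pose phi A := odflt (x0, true) [pick p | Rb A p].
have phiP A : A \in edges e -> Rl A (phi A).
  move=> hA; rewrite /phi; case: pickP => [p /RbP //|none].
  by have [p /PRb] := tot A hA; rewrite none.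
have injphi : {in edges e &, injective phi}.
  move=> A A' hA hA' eq; apply: (inj A A' (phi A)) => //; first exact: phiP.
  by rewrite eq; apply: phiP.
rewrite -(card_in_imset injphi).
apply: (leq_trans (max_card _)).
by rewrite card_prod card_bool Hn mulnC.
Qed.
Definition xs (n u : nat) := if u < 8 then u * n else u - 7.
Definition ys (n u : nat) := if u < 8 then nth 0 [:: 2;5;0;3;6;1;4;7] u * n else u - 7.
Definition xl (n u : nat) := if u < 8 then n + 1 else 1.
Definition fN (u : nat) := if u < 8 then nth 0 [:: 7;0;1;2;3;4;5;6] u else 0.
Definition gN (u : nat) := if u < 8 then nth 0 [:: 5;6;7;0;1;2;3;4] u else 2.
Definition sideN (u : nat) := if u < 8 then odd u else true.

Ltac core_enum u hu := case: u hu => [|[|[|[|[|[|[|[|u]]]]]]]] hu //.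

Lemma CX n u v : 8 <= n -> u < n -> v < n -> u != v ->
  ovl (8 * n) (xs n u) (xl n u) (xs n v) (xl n v) = (v == fN u) || (u == fN v).
Proof.
move=> hn.
rewrite /xs /xl /fN /ovl.
case: (ltnP u 8) => hu; case: (ltnP v 8) => hv.
- core_enum u hu; core_enum v hv => /= *; lia.
- core_enum u hu => /= *; lia.
- core_enum v hv => /= *; lia.
- move=> ? ? /eqP uv; lia.
Qed.

Lemma CY n u v : 8 <= n -> u < n -> v < n -> u != v ->
  ovl (8 * n) (ys n u) (xl n u) (ys n v) (xl n v) = (v == gN u) || (u == gN v).
Proof.
move=> hn.
rewrite /ys /xl /gN /ovl.
case: (ltnP u 8) => hu; case: (ltnP v 8) => hv.
- core_enum u hu; core_enum v hv => /= *; lia.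
- core_enum u hu => /= *; lia.
- core_enum v hv => /= *; lia.
- move=> ? ? /eqP uv; lia.
Qed.

Definition pN (d : bool) := if d then fN else gN.

Lemma fN_lt u : fN u < 8. Proof. rewrite /fN; case: ltnP => // hu; core_enum u hu. Qed.
Lemma gN_lt u : gN u < 8. Proof. rewrite /gN; case: ltnP => // hu; core_enum u hu. Qed.
Lemma pN_lt d u : pN d u < 8. Proof. case: d; [exact: fN_lt | exact: gN_lt]. Qed.

Lemma pN_neq d u : pN d u != u.
Proof. case: d; rewrite /= /fN /gN; case: ltnP => hu; try core_enum u hu; lia. Qed.

Lemma fg_neq u : fN u != gN u.
Proof. rewrite /fN /gN; case: ltnP => hu //; core_enum u hu. Qed.

Lemma noswap d d' u : pN d' (pN d u) != u.
Proof.
case: (ltnP u 8) => hu.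
- core_enum u hu; by case: d; case: d'.
- by apply/eqP => h; have := pN_lt d' (pN d u); rewrite h; lia.
Qed.

Lemma side_pN d u : sideN (pN d u) != sideN u.
Proof.
rewrite /sideN; case: (ltnP u 8) => hu.
- core_enum u hu; by case: d.
- have hu' : (u < 8) = false by lia.
  by case: d; rewrite /= /fN /gN hu'.
Qed.

Lemma no_double u v : u != v ->
  ~~ (((v == fN u) || (u == fN v)) && ((v == gN u) || (u == gN v))).
Proof.
move=> uv; apply/negP => /andP [h1 h2].
case/orP: h1 => /eqP h1; case/orP: h2 => /eqP h2.
- by move: (fg_neq u); rewrite -h1 -h2 eqxx.
- by move: (noswap true false u) => /=; rewrite -h1 -h2 eqxx.
- by move: (noswap false true u) => /=; rewrite -h2 -h1 eqxx.
- by move: (fg_neq v); rewrite -h1 -h2 eqxx.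
Qed.

Lemma ovlC W a l b m : ovl W a l b m = ovl W b m a l.
Proof. rewrite /ovl; lia. Qed.

Lemma xs_lt n u : 8 <= n -> u < n -> xs n u < 8 * n.
Proof. move=> hn; rewrite /xs; case: (ltnP u 8) => h; [core_enum u h|]; lia. Qed.
Lemma ys_lt n u : 8 <= n -> u < n -> ys n u < 8 * n.
Proof. move=> hn; rewrite /ys; case: (ltnP u 8) => h; [core_enum u h|]; rewrite /=; lia. Qed.
Lemma xl_gt n u : 8 <= n -> 0 < xl n u < 8 * n.
Proof. move=> hn; rewrite /xl; case: (ltnP u 8) => h; lia. Qed.

Definition eN (N u v : nat) : bool :=
  (u != v) && (ovl (8 * N) (xs N u) (xl N u) (xs N v) (xl N v)
               || ovl (8 * N) (ys N u) (xl N u) (ys N v) (xl N v)).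

Lemma eN_char N u v : 8 <= N -> u < N -> v < N ->
  eN N u v = [|| v == fN u, u == fN v, v == gN u | u == gN v].
Proof.
move=> hN hu hv; rewrite /eN.
case: (eqVneq u v) => [<-|uv] /=.
- have := pN_neq true u; have := pN_neq false u; rewrite /= => h1 h2.
  by rewrite ![u == _]eq_sym (negbTE h1) (negbTE h2).
- by rewrite CX // CY // !orbA.
Qed.

Lemma part2 (n : nat) : 8 <= n ->
  exists e : rel 'I_n,
    simple_graph e /\ bipartite e /\ torus_TRVG e /\ #|edges e| = 2 * n.
Proof.
case: n => [//|n'] hn.
set N := n'.+1.
exists (fun u v : 'I_N => eN N u v).
have char (u v : 'I_N) : eN N u v = [|| val v == fN u, val u == fN v, val v == gN u | val u == gN v].
  exact: eN_char.
split; [split|split; [|split]].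
- by move=> x; rewrite /eN eqxx.
- by move=> x y; rewrite /eN eq_sym ovlC [ovl _ (ys _ _) _ _ _]ovlC.
- exists (fun u : 'I_N => sideN u) => x y; rewrite char.
  case/or4P => /eqP h.
  + by rewrite h eq_sym; exact: (side_pN true).
  + by rewrite h; exact: (side_pN true).
  + by rewrite h eq_sym; exact: (side_pN false).
  + by rewrite h; exact: (side_pN false).
- exists (INR (8 * N)), (INR (8 * N)),
    (fun u : 'I_N => TRect (INR (xs N u)) (INR (ys N u)) (INR (xl N u)) (INR (xl N u))).
  have W0 : Rlt 0 (INR (8 * N)) by apply: lt_0_INR; apply/ltP; lia.
  have HX (u v : 'I_N) := @ovlP _ _ _ _ _ (xs_lt _ _ hn (ltn_ord u)) (xs_lt _ _ hn (ltn_ord v))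
                 (proj1 (andP (xl_gt _ u hn))) (proj1 (andP (xl_gt _ v hn))).
  have HY (u v : 'I_N) := @ovlP _ _ _ _ _ (ys_lt _ _ hn (ltn_ord u)) (ys_lt _ _ hn (ltn_ord v))
                 (proj1 (andP (xl_gt _ u hn))) (proj1 (andP (xl_gt _ v hn))).
  split; [exact W0|split; [exact W0|split; [|split]]].
  + move=> v; have /andP [h1 h2] := xl_gt _ v hn.
    rewrite /trect_ok /=.
    have a1 : Rlt 0 (INR (xl N v)) by apply: lt_0_INR; apply/ltP.
    have a2 : Rlt (INR (xl N v)) (INR (8 * N)) by apply: lt_INR; apply/ltP.
    by split; split.
  + move=> u v uv [p [q [[i1 i2] [i3 i4]]]].
    move: i1 i2 i3 i4; rewrite /= => i1 i2 i3 i4.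
    have ox := (HX u v).1 (ex_intro _ p (conj i1 i3)).
    have oy := (HY u v).1 (ex_intro _ q (conj i2 i4)).
    have uv' : (val u != val v) by [].
    move: ox oy; rewrite CX // CY // => ox oy.
    by have := @no_double _ _ uv'; rewrite ox oy.
  + move=> u v uv; rewrite /eN uv /= /hor_visible /ver_visible /=.
    split.
    * by case/orP => h; [right; apply/(HX u v) | left; apply/(HY u v)].
    * by case => h; apply/orP; [right; apply/(HY u v) | left; apply/(HX u v)].
- pose h (p : 'I_N * bool) : {set 'I_N} := [set p.1; inord (pN p.2 p.1)].
  have inoK d (u : 'I_N) : (inord (pN d u) : 'I_N) = pN d u :> nat.
    by rewrite inordK //; have := pN_lt d u; lia.
  have hinj : injective h.
    move=> [a d] [a' d'] E; rewrite /h /= in E.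
    have ha : a \in [set a'; inord (pN d' a')] by rewrite -E set21.
    have hb : inord (pN d a) \in [set a'; inord (pN d' a')] by rewrite -E set22.
    have nb (x : 'I_N) dd : x != inord (pN dd x).
      by apply/eqP => /(congr1 (@nat_of_ord N)); rewrite inoK => /eqP; rewrite eq_sym (negbTE (pN_neq _ _)).
    clear E; case/set2P: ha => ea; case/set2P: hb => eb.
    + by move: (nb a d); rewrite eb ea eqxx.
    + subst a'; congr pair.
      move/(congr1 (@nat_of_ord N)): eb; rewrite !inoK => eb.
      by case: d d' eb => [] [] //= eb; [move: (fg_neq a) | move: (fg_neq a)]; rewrite eb eqxx.
    + exfalso; move/(congr1 (@nat_of_ord N)): ea; move/(congr1 (@nat_of_ord N)): eb; rewrite inoK => eb.
      rewrite inoK -eb => /eqP; by rewrite eq_sym (negbTE (noswap _ _ _)).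
    + by move: (nb a d); rewrite eb -ea eqxx.
  have -> : edges (fun u v : 'I_N => eN N u v) = h @: setT.
    apply/setP => A; rewrite inE; apply/idP/idP.
    + case/existsP => x /existsP [y /and3P [xy exy /eqP ->]].
      move: exy; rewrite char; case/or4P => /eqP E.
      * apply/imsetP; exists (x, true) => //; rewrite /h /=; congr (_ |: _); congr set1.
        by apply: val_inj; rewrite /= E (inoK true x).
      * apply/imsetP; exists (y, true) => //; rewrite /h /= setUC; congr (_ |: _); congr set1.
        by apply: val_inj; rewrite /= E (inoK true y).
      * apply/imsetP; exists (x, false) => //; rewrite /h /=; congr (_ |: _); congr set1.
        by apply: val_inj; rewrite /= E (inoK false x).
      * apply/imsetP; exists (y, false) => //; rewrite /h /= setUC; congr (_ |: _); congr set1.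
        by apply: val_inj; rewrite /= E (inoK false y).
    + case/imsetP => -[a d] _ ->; rewrite /h /=.
      apply/existsP; exists a; apply/existsP; exists (inord (pN d a)); rewrite eqxx andbT.
      apply/andP; split.
      * apply/eqP => /(congr1 (@nat_of_ord N)); rewrite inoK => /eqP; by rewrite eq_sym (negbTE (pN_neq _ _)).
      * have inoV dd (u : 'I_N) : \val (inord (pN dd u) : 'I_N) = pN dd u by exact: inoK.
        by rewrite char inoV; case: d; rewrite /= eqxx ?orbT.
  by rewrite (card_imset _ hinj) cardsT card_prod card_ord card_bool mulnC.
Qed.

Theorem theorem4 :
  (forall (n : nat) (T : finType) (e : rel T),
      #|T| = n -> simple_graph e -> bipartite e -> torus_TRVG e ->
      #|edges e| <= 2 * n)
  /\
  (forall n : nat, 8 <= n ->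
      exists e : rel 'I_n,
        simple_graph e /\ bipartite e /\ torus_TRVG e /\ #|edges e| = 2 * n).
Proof. split; [exact: part1 | exact: part2]. Qed.
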